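(* Let $P=\langle p_1,\dots,p_n\rangle$ be a set of points in convex position with positive weights $w_1,\dots,w_n$. For any canonical triple $(i,j,k)$, including the case $k=0$, $$f(i,j,k)=\begin{cases}\max_{p_l\in P_k(i,j)}\bigl(f(i,l,j)+f(l,j,i)+w_l\bigr), & \text{if } P_k(i,j)\neq\emptyset,\\ 0, & \text{otherwise.}\end{cases}$$
   Context: $P$ is in convex position (every point is a hull vertex), no three points collinear, no four cocircular, listed counterclockwise along the hull as the cyclic list $\langle p_1,\dots,p_n\rangle$; $P(i,j)$ denotes the points strictly between $p_i$ and $p_j$ when moving counterclockwise from $p_i$ to $p_j$. An independent set is a subset of $P$ whose pairwise Euclidean distances all exceed $1$. For three points $p,q,s$, $D(p,q,s)$ is the disk whose boundary circle passes through $p,q,s$. A canonical triple $(i,j,k)$ with $k\ne 0$ consists of indices such that $p_i,p_j,p_k$ are in counterclockwise order in $P$ and have pairwise distances greater than $1$; also $(i,j,0)$ is a canonical triple whenever $|p_ip_j|>1$, where $p_0$ is a dummy point and $D(p_i,p_j,p_0)$ is taken to be the halfplane to the left of the directed segment from $p_i$ to $p_j$. For a canonical triple, $P_k(i,j)=\{p\in P(i,j): p\notin D(p_i,p_j,p_k),\ |pp_i|>1,\ |pp_j|>1\}$, and $f(i,j,k)$ is the maximum total weight of a subset $P'\subseteq P(i,j)$ lying outside $D(p_i,p_j,p_k)$ such that $P'\cup\{p_i,p_j\}$ is an independent set (and $0$ if there is no nonempty such subset). *)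

(* Defs.v *)
From HB Require Import structures.
From mathcomp Require Import all_boot all_order all_algebra.
From mathcomp Require Import boolp.
Set Implicit Arguments. Unset Strict Implicit. Unset Printing Implicit Defensive.
Import Order.TTheory GRing.Theory Num.Theory.
Local Open Scope ring_scope.

Section Geometry.
Variable R : rcfType.
Definition pt := (R * R)%type.

Definition dist (a b : pt) : R :=
  Num.sqrt ((a.1 - b.1) ^+ 2 + (a.2 - b.2) ^+ 2).

(* orientation determinant: > 0 iff c lies strictly left of directed a->b *)
Definition orient (a b c : pt) : R :=
  (b.1 - a.1) * (c.2 - a.2) - (b.2 - a.2) * (c.1 - a.1).

Definition in_disk (a b s x : pt) : Prop :=
  exists c : pt, dist c a = dist c b /\ dist c b = dist c s /\ dist c x <= dist c a.

Definition cocircular (a b s t : pt) : Prop :=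
  exists c : pt, dist c a = dist c b /\ dist c b = dist c s /\ dist c s = dist c t.
End Geometry.

(* Points are indexed by 'I_n.+1 : indices 1..n are the points p_1..p_n of the
   cyclic list <p_1,...,p_n>; index 0 is the dummy point p_0 (its coordinates
   are never used). *)
Section Problem.
Variables (R : rcfType) (n : nat) (p : 'I_n.+1 -> pt R) (w : 'I_n.+1 -> R).

(* p_1..p_n are in convex position, no three collinear, listed counterclockwise
   along the hull: every index-ordered triple is strictly counterclockwise. *)
Definition convex_ccw : Prop :=
  forall a b c : 'I_n.+1, (0 < a)%N -> (a < b)%N -> (b < c)%N ->
    0 < orient (p a) (p b) (p c).

Definition no_four_cocircular : Prop :=
  forall a b c d : 'I_n.+1, (0 < a)%N -> (0 < b)%N -> (0 < c)%N -> (0 < d)%N ->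
    uniq [:: a; b; c; d] -> ~ cocircular (p a) (p b) (p c) (p d).

(* l \in P(i,j): p_l strictly between p_i and p_j counterclockwise *)
Definition between (i j l : 'I_n.+1) : bool :=
  (0 < l)%N && (if (i < j)%N then (i < l < j)%N else (i < l)%N || (l < j)%N).

(* membership in D(p_i,p_j,p_k); for k = 0, the halfplane left of p_i -> p_j *)
Definition in_D (i j k : 'I_n.+1) (x : pt R) : Prop :=
  if (k == 0 :> nat) then (0 < orient (p i) (p j) x : Prop)
  else in_disk (p i) (p j) (p k) x.

Definition far (a b : 'I_n.+1) : bool := 1 < dist (p a) (p b).

Definition canonical_triple (i j k : 'I_n.+1) : bool :=
  if (k == 0 :> nat) then [&& (0 < i)%N, (0 < j)%N & far i j]
  else [&& (0 < i)%N, between i k j, far i j, far j k & far i k].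

Definition independent (S : {set 'I_n.+1}) : bool :=
  [forall a in S, forall b in S, (a != b) ==> far a b].

Definition feasible (i j k : 'I_n.+1) (S : {set 'I_n.+1}) : bool :=
  [forall l in S, between i j l && ~~ `[< in_D i j k (p l) >]]
  && independent (i |: (j |: S)).

Definition f (i j k : 'I_n.+1) : R :=
  \big[Num.max/0]_(S : {set 'I_n.+1} | feasible i j k S) \sum_(l in S) w l.

Definition Pk (i j k : 'I_n.+1) : {set 'I_n.+1} :=
  [set l | [&& between i j l, ~~ `[< in_D i j k (p l) >], far l i & far l j]].
End Problem.

(* Main.v *)
Require Import Defs.
From HB Require Import structures.
From mathcomp Require Import all_boot all_order all_algebra.
From mathcomp Require Import boolp.
From mathcomp Require Import ring lra zify.
Import Order.TTheory GRing.Theory Num.Theory.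
Local Open Scope ring_scope.

Section Geo.
Variable R : rcfType.
Implicit Types a b c d s x : pt R.

Definition d2 a b : R := (a.1-b.1)^+2 + (a.2-b.2)^+2.
Definition dotp a b c : R := (a.1-b.1)*(c.1-b.1) + (a.2-b.2)*(c.2-b.2).
Definition ic a b c d : R :=
  let u1 := a.1 - d.1 in let u2 := a.2 - d.2 in let u3 := u1^+2 + u2^+2 in
  let v1 := b.1 - d.1 in let v2 := b.2 - d.2 in let v3 := v1^+2 + v2^+2 in
  let t1 := c.1 - d.1 in let t2 := c.2 - d.2 in let t3 := t1^+2 + t2^+2 in
  u1*(v2*t3 - v3*t2) - u2*(v1*t3 - v3*t1) + u3*(v1*t2 - v2*t1).

Lemma d2_ge0 a b : 0 <= d2 a b.
Proof. by rewrite /d2 addr_ge0 // sqr_ge0. Qed.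

Lemma d2C a b : d2 a b = d2 b a.
Proof. rewrite /d2; ring. Qed.

Lemma far_d2 a b : (1 < dist a b) = (1 < d2 a b).
Proof.
rewrite /dist -/(d2 a b); case: (ltrP 0 (d2 a b)) => hs.
  by rewrite -{1}sqrtr1 ltr_sqrt.
have -> : Num.sqrt (d2 a b) = 0 by apply/eqP; rewrite sqrtr_eq0.
by rewrite ltr10; apply/esym/negbTE; rewrite -leNgt (le_trans hs) ?ler01.
Qed.

Lemma dist_eq a b c d : (dist a b = dist c d) <-> (d2 a b = d2 c d).
Proof.
rewrite /dist -/(d2 a b) -/(d2 c d); split=> [h|->] //.
by apply/eqP; rewrite -eqr_sqrt ?d2_ge0 // h.
Qed.

Lemma dist_le a b c d : (dist a b <= dist c d) = (d2 a b <= d2 c d).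
Proof. by rewrite /dist -/(d2 a b) -/(d2 c d) ler_sqrt ?d2_ge0. Qed.

Lemma ic_center a b s x c :
  d2 c a = d2 c b -> d2 c b = d2 c s ->
  ic a b s x = orient a b s * (d2 c a - d2 c x).
Proof.
move=> h1 h2.
have e : ic a b s x - orient a b s * (d2 c a - d2 c x) =
  (-((a.1-x.1)*(s.2-x.2) - (a.2-x.2)*(s.1-x.1))) * (d2 c b - d2 c a)
  + ((a.1-x.1)*(b.2-x.2) - (a.2-x.2)*(b.1-x.1)) * (d2 c s - d2 c a).
  rewrite /ic /orient /d2 /=; ring.
apply/eqP; rewrite -subr_eq0 e -h2 -h1; apply/eqP; ring.
Qed.

Lemma circumcenter a b s : orient a b s != 0 ->
  exists c, d2 c a = d2 c b /\ d2 c b = d2 c s.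
Proof.
move=> h.
set D := 2 * orient a b s.
have hD : D != 0 by rewrite /D mulf_neq0 // pnatr_eq0.
set na := a.1^+2 + a.2^+2. set nb := b.1^+2 + b.2^+2. set ns := s.1^+2 + s.2^+2.
exists ((na*(b.2-s.2) + nb*(s.2-a.2) + ns*(a.2-b.2))/D,
        (na*(s.1-b.1) + nb*(a.1-s.1) + ns*(b.1-a.1))/D).
rewrite /d2 /=; move: hD; rewrite /D /orient /na /nb /ns => hD.
split; field; rewrite ?hD //. all: try done.
Qed.

Lemma disk_iff a b s x : 0 < orient a b s ->
  in_disk a b s x <-> 0 <= ic a b s x.
Proof.
move=> ho; split.
  case=> c [/dist_eq h1 [/dist_eq h2 h3]].
  rewrite (ic_center _ _ _ x _ h1 h2) mulr_ge0 ?(ltW ho) // subr_ge0.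
  by rewrite -dist_le.
move=> hic; have [c [h1 h2]] := circumcenter _ _ _ (lt0r_neq0 ho).
exists c; split; first by apply/dist_eq.
split; first by apply/dist_eq.
rewrite dist_le; move: hic; rewrite (ic_center _ _ _ x _ h1 h2) pmulr_rge0 //.
by rewrite subr_ge0.
Qed.

Lemma cocirc_ic0 a b s x : orient a b s != 0 -> ic a b s x = 0 ->
  cocircular a b s x.
Proof.
move=> ho h0; have [c [h1 h2]] := circumcenter _ _ _ ho.
move: h0; rewrite (ic_center _ _ _ x _ h1 h2) => /eqP; rewrite mulf_eq0 (negbTE ho) /=.
rewrite subr_eq0 => /eqP h3.
by exists c; split; [apply/dist_eq|split; apply/dist_eq => //; rewrite -h2 -h1].
Qed.

Lemma plucker p q u v w :
  orient p q v * ic p q u w = orient p q w * ic p q u v + orient p q u * ic p q v w.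
Proof. rewrite /orient /ic /=; ring. Qed.

Lemma ic_E i j l x :
  ic i j l x = orient i j x * dotp i l j - orient i j l * dotp i x j.
Proof. rewrite /orient /ic /dotp /=; ring. Qed.

Lemma ic_swap14 a b c d : ic d b c a = - ic a b c d.
Proof. rewrite /ic /=; ring. Qed.
Lemma ic_perm2 a b c d : ic d c a b = - ic a b c d.
Proof. rewrite /ic /=; ring. Qed.
Lemma ic_perm3 a b c d : ic a b c d = - ic b d a c.
Proof. rewrite /ic /=; ring. Qed.
Lemma ic_rot a b c d : ic b c a d = ic a b c d.
Proof. rewrite /ic /=; ring. Qed.
Lemma ic_sw23 a b c d : ic a c b d = - ic a b c d.
Proof. rewrite /ic /=; ring. Qed.

Lemma orient_rot a b c : orient b c a = orient a b c.
Proof. rewrite /orient; ring. Qed.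
Lemma orient_sw a b c : orient a c b = - orient a b c.
Proof. rewrite /orient; ring. Qed.

Lemma quad_far a b c d : 0 < orient a b c -> 0 < orient a c d -> 0 < ic a b c d ->
  1 < d2 a b -> 1 < d2 a d -> 1 < d2 a c.
Proof.
move=> h1 h2 h3 hb hd.
have e : ic a b c d = - (orient a b c * dotp a d c + orient a c d * dotp a b c).
  rewrite /ic /orient /dotp /=; ring.
have eb : d2 a c = d2 a b + d2 c b - 2 * dotp a b c by rewrite /d2 /dotp; ring.
have ed : d2 a c = d2 a d + d2 c d - 2 * dotp a d c by rewrite /d2 /dotp; ring.
have [hdb|hdb] := ltrP (dotp a b c) 0.
  by rewrite eb; have := d2_ge0 c b; lra.
have [hdd|hdd] := ltrP (dotp a d c) 0.
  by rewrite ed; have := d2_ge0 c d; lra.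
move: h3; rewrite e oppr_gt0 => h3.
have : 0 <= orient a b c * dotp a d c + orient a c d * dotp a b c.
  by rewrite addr_ge0 // mulr_ge0 // ltW.
by rewrite leNgt h3.
Qed.

Lemma in_disk_rot a b s x : in_disk a b s x <-> in_disk b s a x.
Proof.
split; case=> c [h1 [h2 h3]]; exists c.
  by split=> //; split; [rewrite -h2 -h1|rewrite -h1].
by split; [rewrite h1 h2|split; [by []|rewrite -h2 -h1]].
Qed.

Lemma in_disk_sw a b s x : in_disk a b s x <-> in_disk a s b x.
Proof.
split; case=> c [h1 [h2 h3]]; exists c.
  by split; [rewrite h1|split; [rewrite h2|]].
by split; [rewrite h1 h2|split; [rewrite h2|]].
Qed.
End Geo.
Arguments d2 {R}. Arguments dotp {R}. Arguments ic {R}.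

Section Prob.
Variables (R : rcfType) (n : nat) (p : 'I_n.+1 -> pt R) (w : 'I_n.+1 -> R).
Hypothesis hconv : convex_ccw p.
Hypothesis hcirc : no_four_cocircular p.
Hypothesis hw : forall l : 'I_n.+1, (0 < l)%N -> 0 < w l.
Local Notation I := 'I_n.+1.
Local Notation o a b c := (orient (p a) (p b) (p c)).
Local Notation icp a b c d := (ic (p a) (p b) (p c) (p d)).

Lemma betweenE (i j l : I) : between i j l =
  (0 < l)%N && ((i < j)%N && (i < l)%N && (l < j)%N || (j <= i)%N && ((i < l)%N || (l < j)%N)).
Proof. rewrite /between; case: (ltnP i j) => h /=; rewrite ?andbT ?andbF ?orbF //; case: (0 < l)%N =>//=; lia. Qed.

Lemma ccw (a b c : I) : (0 < a)%N -> (0 < b)%N -> (0 < c)%N ->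
  [|| (a < b < c)%N, (b < c < a)%N | (c < a < b)%N] -> 0 < o a b c.
Proof.
move=> ha hb hc /or3P [/andP[h1 h2]|/andP[h1 h2]|/andP[h1 h2]].
- exact: hconv.
- by rewrite -orient_rot; apply: hconv.
- by rewrite orient_rot; apply: hconv.
Qed.

Lemma farE (a b : I) : far p a b = (1 < d2 (p a) (p b)).
Proof. by rewrite /far far_d2. Qed.

Lemma farC (a b : I) : far p a b = far p b a.
Proof. by rewrite !farE d2C. Qed.

Lemma far_neq (a b : I) : far p a b -> a != b.
Proof.
rewrite farE; apply: contraTN => /eqP ->.
by rewrite /d2 !subrr expr0n /= addr0 ltr10.
Qed.

Lemma indepP (S : {set I}) :
  reflect (forall a b, a \in S -> b \in S -> a != b -> far p a b) (independent p S).
Proof.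
apply: (iffP forall_inP) => [h a b ha hb hab|h a ha].
  by move: (h a ha) => /forall_inP /(_ b hb) /implyP; apply.
by apply/forall_inP => b hb; apply/implyP; apply: h.
Qed.

Lemma indep_sub (S T : {set I}) : S \subset T -> independent p T -> independent p S.
Proof.
move=> /subsetP hs /indepP h; apply/indepP => a b ha hb; apply: h; exact: hs.
Qed.

Lemma not_disk_ic (a b s x : I) : 0 < o a b s ->
  ~ in_disk (p a) (p b) (p s) (p x) <-> icp a b s x < 0.
Proof.
move=> h; have [h1 h2] := @disk_iff _ _ _ _ (p x) h; rewrite ltNge; split.
  by move=> H; apply/negP => /h2.
by move=> /negP H /h1.
Qed.


Ltac bt := repeat match goal with
  | H : is_true (between _ _ _) |- _ => rewrite betweenE in H
  end.

Lemma G2x (i j l x : I) : (0 < i)%N -> (0 < j)%N -> (i : nat) != j ->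
  between i j l -> between i l x -> icp i l j x < 0 ->
  far p x i -> far p x l -> far p x j.
Proof.
move=> hi hj hij hl hx hic; rewrite !farE => fi fl.
have ? := hl; have ? := hx; bt.
apply: (quad_far _ (p x) (p l) (p j) (p i)) => //.
- apply: ccw; lia.
- apply: ccw; lia.
- by rewrite ic_swap14 oppr_gt0.
Qed.

Lemma G2y (i j l y : I) : (0 < i)%N -> (0 < j)%N -> (i : nat) != j ->
  between i j l -> between l j y -> icp i l j y < 0 ->
  far p y j -> far p y l -> far p y i.
Proof.
move=> hi hj hij hl hy hic; rewrite !farE => fj fl.
have ? := hl; have ? := hy; bt.
apply: (quad_far _ (p y) (p j) (p i) (p l)) => //.
- apply: ccw; lia.
- apply: ccw; lia.
- by rewrite ic_perm2 oppr_gt0.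
Qed.

Lemma G3 (i j l x y : I) : (0 < i)%N -> (0 < j)%N -> (i : nat) != j ->
  between i j l -> between i l x -> between l j y ->
  icp i l j x < 0 -> icp i l j y < 0 ->
  far p x l -> far p x i -> far p x y.
Proof.
move=> hi hj hij hl hx hy icx icy; rewrite !farE => fl fi.
have ? := hl; have ? := hx; have ? := hy; bt.
apply: (quad_far _ (p x) (p l) (p y) (p i)) => //.
- apply: ccw; lia.
- apply: ccw; lia.
rewrite ic_perm3 oppr_gt0.
have e := plucker _ (p l) (p i) (p j) (p x) (p y).
have ex : icp l i j x = - icp i l j x by rewrite ic_sw23 ic_rot.
have ey : icp l i j y = - icp i l j y by rewrite ic_sw23 ic_rot.
rewrite ex ey in e.
have ox : 0 < o l i x by apply: ccw; lia.
have oy : o l i y < 0 by rewrite orient_sw oppr_lt0; apply: ccw; lia.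
have oj : o l i j < 0 by rewrite orient_sw oppr_lt0; apply: ccw; lia.
nra.
Qed.

Lemma C2 (i j k l z : I) : (0 < i)%N -> (0 < j)%N -> (0 < k)%N -> (i : nat) != j -> (i : nat) != k ->
  between i k j -> between i j l -> between i j z ->
  ~ in_disk (p i) (p j) (p k) (p l) -> icp i l j z < 0 ->
  ~ in_disk (p i) (p j) (p k) (p z).
Proof.
move=> hi hj hk hij hik hkj hl hz nl icz.
have ? := hkj; have ? := hl; have ? := hz; bt.
have ok : 0 < o i j k by apply: ccw; lia.
apply/(not_disk_ic _ _ _ z ok).
move/(not_disk_ic _ _ _ l ok): nl => nl.
have e := plucker _ (p i) (p j) (p k) (p l) (p z).
have ez : icp i j l z = - icp i l j z by rewrite ic_sw23.
rewrite ez in e.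
have ol : o i j l < 0 by rewrite orient_sw oppr_lt0; apply: ccw; lia.
have oz : o i j z < 0 by rewrite orient_sw oppr_lt0; apply: ccw; lia.
nra.
Qed.


Definition key (i j z : I) : R := dotp (p i) (p z) (p j) / o i j z.

Lemma Bkey (i j l x : I) : (0 < i)%N -> (0 < j)%N -> (i : nat) != j ->
  between i j l -> between i j x -> (x : nat) != l -> key i j x <= key i j l ->
  icp i l j x < 0.
Proof.
move=> hi hj hij hl hx hxl hk.
have ? := hl; have ? := hx; bt.
have ol : o i j l < 0 by rewrite orient_sw oppr_lt0; apply: ccw; lia.
have ox : o i j x < 0 by rewrite orient_sw oppr_lt0; apply: ccw; lia.
have e : icp i j l x = o i j x * o i j l * (key i j l - key i j x).
  rewrite ic_E /key; field; apply/andP; split; exact: ltr0_neq0.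
have ge : 0 <= icp i j l x by rewrite e mulr_ge0 ?subr_ge0 // nmulr_rge0 // ltW.
rewrite ic_sw23 oppr_lt0 lt_def ge andbT.
apply/negP => /eqP h0.
have := cocirc_ic0 _ _ _ _ _ (ltr0_neq0 ol) h0.
apply: hcirc => //; first lia.
- lia.
- rewrite /= !in_cons !in_nil !orbF -!val_eqE /=; lia.
Qed.

Lemma split_S (i j l x : I) : (i : nat) != j -> between i j l -> between i j x ->
  ((x != l) && between i l x = between i l x) /\
  ((x != l) && ~~ between i l x = between l j x).
Proof.
move=> hij hl hx; move: hl hx; rewrite !betweenE -!val_eqE /= => hl hx.
by split; apply/idP/idP => H; lia.
Qed.

Lemma sum_split (i j l : I) (U : {set I}) : (i : nat) != j -> between i j l ->
  l \in U -> (forall z, z \in U -> between i j z) ->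
  \sum_(z in U) w z = w l + \sum_(z in [set z in U | between i l z]) w z
                         + \sum_(z in [set z in U | between l j z]) w z.
Proof.
move=> hij hl hlU hU.
rewrite (bigD1 l) //= (bigID (fun z => between i l z)) /= addrA.
congr (_ + _ + _); apply: eq_bigl => z; rewrite inE;
  case hz: (z \in U) => //=; have [e1 e2] := split_S _ _ _ z hij hl (hU z hz).
- by rewrite e1.
- by rewrite e2.
Qed.

Lemma feasibleP (i j k : I) (S : {set I}) :
  feasible p i j k S <->
  (forall l, l \in S -> between i j l /\ ~ in_D p i j k (p l)) /\
  independent p (i |: (j |: S)).
Proof.
rewrite /feasible; split.
  case/andP => /forall_inP h hi; split => // l hl.
  by case/andP: (h l hl) => -> /asboolPn.
case=> h hi; rewrite hi andbT; apply/forall_inP => l hl.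
by case: (h l hl) => -> /asboolPn.
Qed.

Lemma in_D_pos (i j k : I) x : (0 < k)%N ->
  in_D p i j k x <-> in_disk (p i) (p j) (p k) x.
Proof. by move=> hk; rewrite /in_D ifF //; apply/negbTE; rewrite -lt0n. Qed.

Lemma in_D_0 (i j k : I) x : (k : nat) = 0%N ->
  in_D p i j k x <-> 0 < orient (p i) (p j) x.
Proof. by move=> hk; rewrite /in_D hk eqxx. Qed.

Lemma feas_ge0 (i j k : I) S : feasible p i j k S -> 0 <= \sum_(l in S) w l.
Proof.
case/feasibleP => h _; apply: sumr_ge0 => l /h [hb _].
by apply: ltW; apply: hw; move: hb; rewrite betweenE => /andP[].
Qed.

Lemma f_ge (i j k : I) S : feasible p i j k S -> \sum_(l in S) w l <= f p w i j k.
Proof. by move=> h; rewrite /f; apply: (le_bigmax_cond _ _ h). Qed.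

Lemma f_le (i j k : I) v : 0 <= v ->
  (forall S, feasible p i j k S -> \sum_(l in S) w l <= v) -> f p w i j k <= v.
Proof. by move=> h0 h; rewrite /f; apply: bigmax_le. Qed.

Lemma f_att (i j k : I) : feasible p i j k set0 ->
  exists2 S, feasible p i j k S & f p w i j k = \sum_(l in S) w l.
Proof.
move=> h0; rewrite /f.
have [S hS ->] := eq_bigmax set0 (feasible p i j k) (fun S => \sum_(l in S) w l) h0 (@feas_ge0 i j k).
by exists S.
Qed.

Lemma feas0 (i j k : I) : far p i j -> feasible p i j k set0.
Proof.
move=> hf; apply/feasibleP; split => [l|]; first by rewrite inE.
apply/indepP => a b; rewrite setU0 !inE => /orP[] /eqP -> /orP[] /eqP -> //;
  rewrite ?eqxx // => _; by rewrite farC.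
Qed.

Lemma fnn (a b c : I) : far p a b -> 0 <= f p w a b c.
Proof. by move=> h; have := f_ge _ _ _ _ (feas0 _ _ c h); rewrite big_set0. Qed.

Lemma btw_neq_r (a b x : I) : between a b x -> x != b.
Proof. rewrite betweenE -val_eqE /=; lia. Qed.
Lemma btw_neq_l (a b x : I) : between a b x -> x != a.
Proof. rewrite betweenE -val_eqE /=; lia. Qed.
Lemma ccw_between (i j l : I) : (0 < i)%N -> (0 < j)%N -> (i : nat) != j ->
  between i j l -> 0 < o i l j.
Proof. move=> hi hj hij; rewrite betweenE => h; apply: ccw => //; lia. Qed.

Lemma btw_trans_l (i j l x : I) : (i : nat) != j -> between i j l -> between i l x -> between i j x.
Proof. move=> h; rewrite !betweenE => h1 h2; lia. Qed.
Lemma btw_trans_r (i j l x : I) : (i : nat) != j -> between i j l -> between l j x -> between i j x.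
Proof. move=> h; rewrite !betweenE => h1 h2; lia. Qed.
Lemma btw_excl (i j l x : I) : (i : nat) != j -> between i j l -> between i l x -> between l j x -> False.
Proof. move=> h; rewrite !betweenE => h1 h2 h3; lia. Qed.

Lemma btw_pos (a b x : I) : between a b x -> (0 < x)%N.
Proof. by rewrite betweenE => /andP[]. Qed.

Lemma upper (i j k : I) S : (0 < i)%N -> (0 < j)%N -> far p i j ->
  feasible p i j k S -> S != set0 ->
  exists2 l, l \in Pk p i j k & \sum_(x in S) w x <= f p w i l j + f p w l j i + w l.
Proof.
move=> hi hj fij hF /set0Pn [z0 hz0].
have hij : (i : nat) != j by exact: far_neq fij.
move/feasibleP: hF => [hS' hind'].
case: (@arg_maxP _ _ _ z0 (mem S) (key i j) hz0) => l hlS0 hmax.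
have hlS : l \in S := hlS0.
have [hbl nDl] := hS' l hlS.
have li : l != i by apply: btw_neq_l hbl.
have lj : l != j by apply: btw_neq_r hbl.
have fli : far p l i.
  by move/indepP: hind' => H; apply: H li; rewrite !inE ?eqxx ?hlS ?orbT.
have flj : far p l j.
  by move/indepP: hind' => H; apply: H lj; rewrite !inE ?eqxx ?hlS ?orbT.
have oilj : 0 < o i l j by apply: ccw_between.
have ndisk : forall x, x \in S -> x != l -> ~ in_disk (p i) (p l) (p j) (p x).
  move=> x hx hxl; apply/(not_disk_ic _ _ _ x oilj).
  exact: (Bkey _ _ _ _ hi hj hij hbl (hS' x hx).1 hxl (hmax x hx)).
exists l.
  by rewrite inE hbl fli flj /= andbT; apply/asboolPn.
rewrite (sum_split _ _ _ _ hij hbl hlS (fun z hz => (hS' z hz).1)).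
set S1 := [set z in S | between i l z]; set S2 := [set z in S | between l j z].
have F1 : feasible p i l j S1.
  apply/feasibleP; split.
    move=> x; rewrite inE => /andP [hxS hbx]; split => //.
    rewrite in_D_pos //; apply: ndisk hxS _.
    exact: btw_neq_r hbx.
  apply: indep_sub hind'; apply/subsetP => z; rewrite !inE.
  case/orP => [->//|/orP[/eqP->|/andP[->]]]; by rewrite ?hlS ?orbT.
have F2 : feasible p l j i S2.
  apply/feasibleP; split.
    move=> x; rewrite inE => /andP [hxS hbx]; split => //.
    rewrite in_D_pos // => H; apply: (ndisk x hxS).
      exact: btw_neq_l hbx.
    by apply/in_disk_rot.
  apply: indep_sub hind'; apply/subsetP => z; rewrite !inE.
  case/orP => [/eqP->|/orP[->|/andP[->]]]; by rewrite ?hlS ?orbT.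
have := f_ge _ _ _ _ F1; have := f_ge _ _ _ _ F2; lra.
Qed.

Lemma lower (i j k l : I) : (0 < i)%N -> (0 < j)%N -> far p i j ->
  between i j l -> ~ in_D p i j k (p l) -> far p l i -> far p l j ->
  (forall z, between i j z -> icp i l j z < 0 -> ~ in_D p i j k (p z)) ->
  f p w i l j + f p w l j i + w l <= f p w i j k.
Proof.
move=> hi hj fij hbl nDl fli flj outside.
have hij : (i : nat) != j by exact: far_neq fij.
have oilj := ccw_between _ _ _ hi hj hij hbl.
have fil : far p i l by rewrite farC.
have [S1 F1 ->] := f_att _ _ _ (feas0 i l j fil).
have [S2 F2 ->] := f_att _ _ _ (feas0 l j i flj).
have FF1 := F1; have FF2 := F2.
move/feasibleP: F1 => [h1 hi1]; move/feasibleP: F2 => [h2 hi2].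
have b1 : forall x, x \in S1 -> between i l x by move=> x hx; case: (h1 x hx).
have b2 : forall x, x \in S2 -> between l j x by move=> x hx; case: (h2 x hx).
have ic1 : forall x, x \in S1 -> icp i l j x < 0.
  move=> x hx; apply: (proj1 (not_disk_ic _ _ _ x oilj)) => H.
  by case: (h1 x hx) => _; apply; apply/(in_D_pos _ _ _ _ hj).
have ic2 : forall x, x \in S2 -> icp i l j x < 0.
  move=> x hx; apply: (proj1 (not_disk_ic _ _ _ x oilj)) => H.
  by case: (h2 x hx) => _; apply; apply/(in_D_pos _ _ _ _ hi); exact: (proj1 (in_disk_rot _ _ _ _ _) H).
have fxi : forall x, x \in S1 -> far p x i.
  move=> x hx; move/indepP: hi1 => H; apply: H (btw_neq_l _ _ _ (b1 x hx));
  by rewrite !inE ?eqxx ?hx ?orbT.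
have fxl : forall x, x \in S1 -> far p x l.
  move=> x hx; move/indepP: hi1 => H; apply: H (btw_neq_r _ _ _ (b1 x hx));
  by rewrite !inE ?eqxx ?hx ?orbT.
have fxx : forall x y, x \in S1 -> y \in S1 -> x != y -> far p x y.
  move=> x y hx hy; move/indepP: hi1 => H; apply: H;
  by rewrite !inE ?eqxx ?hx ?hy ?orbT.
have fyl : forall x, x \in S2 -> far p x l.
  move=> x hx; move/indepP: hi2 => H; apply: H (btw_neq_l _ _ _ (b2 x hx));
  by rewrite !inE ?eqxx ?hx ?orbT.
have fyj : forall x, x \in S2 -> far p x j.
  move=> x hx; move/indepP: hi2 => H; apply: H (btw_neq_r _ _ _ (b2 x hx));
  by rewrite !inE ?eqxx ?hx ?orbT.
have fyy : forall x y, x \in S2 -> y \in S2 -> x != y -> far p x y.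
  move=> x y hx hy; move/indepP: hi2 => H; apply: H;
  by rewrite !inE ?eqxx ?hx ?hy ?orbT.
have fxj : forall x, x \in S1 -> far p x j.
  by move=> x hx; apply: (G2x _ _ _ _ hi hj hij hbl (b1 x hx) (ic1 x hx) (fxi x hx) (fxl x hx)).
have fyi : forall x, x \in S2 -> far p x i.
  by move=> x hx; apply: (G2y _ _ _ _ hi hj hij hbl (b2 x hx) (ic2 x hx) (fyj x hx) (fyl x hx)).
have fxy : forall x y, x \in S1 -> y \in S2 -> far p x y.
  by move=> x y hx hy; apply: (G3 _ _ _ _ _ hi hj hij hbl (b1 x hx) (b2 y hy) (ic1 x hx) (ic2 y hy) (fxl x hx) (fxi x hx)).
set T := l |: (S1 :|: S2).
have hT : forall z, z \in T -> between i j z.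
  move=> z; rewrite !inE => /orP [/eqP->//|/orP[hz|hz]].
    exact: btw_trans_l hij hbl (b1 z hz).
  exact: btw_trans_r hij hbl (b2 z hz).
have FT : feasible p i j k T.
  apply/feasibleP; split.
    move=> z hz; have hzT := hT z hz; split => //.
    move: hz; rewrite !inE => /orP [/eqP->//|/orP[hz|hz]].
      exact: outside hzT (ic1 z hz).
    exact: outside hzT (ic2 z hz).
  apply/indepP => a b; rewrite !inE => ha hb hab.
  move: ha => /orP [/eqP ea|/orP[/eqP ea|/orP[/eqP ea|/orP[ha|ha]]]];
  move: hb => /orP [/eqP eb|/orP[/eqP eb|/orP[/eqP eb|/orP[hb|hb]]]];
  rewrite ?ea ?eb in hab *; rewrite ?eqxx // in hab;
  first [ by [] | by rewrite farC | by auto | by rewrite farC; auto ].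
have sT : \sum_(z in T) w z = w l + \sum_(x in S1) w x + \sum_(y in S2) w y.
  have hlT : l \in T by rewrite !inE eqxx.
  rewrite (sum_split _ _ _ _ hij hbl hlT hT).
  have -> : [set z in T | between i l z] = S1.
    apply/setP => z; rewrite !inE; apply/idP/idP.
      case/andP => /orP [/eqP-> | /orP [hz|hz]] hb //.
        by have := btw_neq_r _ _ _ hb; rewrite eqxx.
      by case: (btw_excl _ _ _ _ hij hbl hb (b2 z hz)).
    by move=> hz; rewrite hz !orbT b1.
  have -> : [set z in T | between l j z] = S2.
    apply/setP => z; rewrite !inE; apply/idP/idP.
      case/andP => /orP [/eqP-> | /orP [hz|hz]] hb //.
        by have := btw_neq_l _ _ _ hb; rewrite eqxx.
      by case: (btw_excl _ _ _ _ hij hbl (b1 z hz) hb).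
    by move=> hz; rewrite hz !orbT b2.
  by [].
have := f_ge _ _ _ _ FT; rewrite sT; lra.
Qed.

Lemma main (i j k : I) : canonical_triple p i j k ->
  f p w i j k =
    if Pk p i j k != set0 then
      \big[Num.max/0]_(l in Pk p i j k) (f p w i l j + f p w l j i + w l)
    else 0.
Proof.
move=> hcan.
have [hi hj fij kcase] : [/\ (0 < i)%N, (0 < j)%N, far p i j &
   ((k : nat) = 0%N \/ [/\ (0 < k)%N, between i k j & far p i k])].
  move: hcan; rewrite /canonical_triple; case: eqP => hk.
    by case/and3P => -> -> ->; split => //; left.
  case/and5P => -> hb -> _ hik; split => //; first exact: btw_pos hb.
  by right; split => //; rewrite lt0n; apply/eqP.
have hij : (i : nat) != j by exact: far_neq fij.
have outside : forall l z, between i j l -> ~ in_D p i j k (p l) -> between i j z ->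
   icp i l j z < 0 -> ~ in_D p i j k (p z).
  move=> l z hl nl hz icz; case: kcase => [hk0 | [hk hkj fik]].
    move/(in_D_0 _ _ _ _ hk0) => H.
    by have := ccw_between _ _ _ hi hj hij hz; rewrite orient_sw; lra.
  have hik : (i : nat) != k by exact: far_neq fik.
  move=> H; apply: (C2 i j k l z hi hj hk hij hik hkj hl hz _ icz).
    by move=> H'; apply: nl; apply/(in_D_pos _ _ _ _ hk).
  by apply/(in_D_pos _ _ _ _ hk).
have PkP : forall l, l \in Pk p i j k ->
    [/\ between i j l, ~ in_D p i j k (p l), far p l i & far p l j].
  by move=> l; rewrite inE => /and4P [-> /asboolPn ? -> ->].
case: ifP => hPk.
  have rhs0 : 0 <= \big[Num.max/0]_(l in Pk p i j k) (f p w i l j + f p w l j i + w l).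
    case/set0Pn: hPk => l0 hl0; apply: (bigmax_sup l0) => //.
    case: (PkP l0 hl0) => hb _ fli flj.
    have fil : far p i l0 by rewrite farC.
    have := fnn i l0 j fil; have := fnn l0 j i flj.
    have := hw l0 (btw_pos _ _ _ hb); lra.
  apply/eqP; rewrite eq_le; apply/andP; split.
    apply: f_le => // S hS; case: (eqVneq S set0) => [->|hne].
      by rewrite big_set0.
    have [l hl hle] := upper i j k S hi hj fij hS hne.
    apply: le_trans hle _; exact: le_bigmax_cond.
  apply: bigmax_le => [|l hl]; first exact: fnn.
  case: (PkP l hl) => hbl nDl fli flj.
  exact: (lower i j k l hi hj fij hbl nDl fli flj (fun z => outside l z hbl nDl)).
move/negbFE/eqP: hPk => e.
apply/eqP; rewrite eq_le fnn // andbT.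
apply: f_le => // S hS; rewrite big1 // => x hx; exfalso.
move/feasibleP: hS => [h hind]; have [hb nD] := h x hx.
have : x \in Pk p i j k.
  rewrite inE hb /=; apply/and3P; split; first by apply/asboolPn.
    move/indepP: hind => H; apply: H (btw_neq_l _ _ _ hb);
    by rewrite !inE ?eqxx ?hx ?orbT.
  move/indepP: hind => H; apply: H (btw_neq_r _ _ _ hb);
  by rewrite !inE ?eqxx ?hx ?orbT.
by rewrite e inE.
Qed.

End Prob.

Theorem lemma20 (R : rcfType) (n : nat) (p : 'I_n.+1 -> pt R) (w : 'I_n.+1 -> R)
  (hconv : convex_ccw p) (hcirc : no_four_cocircular p)
  (hw : forall l : 'I_n.+1, (0 < l)%N -> 0 < w l)
  (i j k : 'I_n.+1) (hcan : canonical_triple p i j k) :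
  f p w i j k =
    if Pk p i j k != set0 then
      \big[Num.max/0]_(l in Pk p i j k) (f p w i l j + f p w l j i + w l)
    else 0.
Proof. by apply: main. Qed.
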